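(* The subvariety $\mathcal S\subseteq\mathscr X_2$ is a rational section for the action of $G=\mathrm{SO}_3(\mathbb C)\times\mathrm{SO}_3(\mathbb C)$ on $\mathscr X_2$.
   Context: Two-qubit setting in coordinates: identify $V_1=V_2=\mathbb C^2$ and use the Pauli matrices $\sigma_1=\begin{pmatrix}0&1\\1&0\end{pmatrix}$, $\sigma_2=\begin{pmatrix}0&-i\\i&0\end{pmatrix}$, $\sigma_3=\begin{pmatrix}1&0\\0&-1\end{pmatrix}$. Every trace-one endomorphism $\rho$ of $\mathbb C^2\otimes\mathbb C^2$ (L-state) is uniquely $\rho=\tfrac14\big(I\otimes I+\sum_a v_a\sigma_a\otimes I+\sum_b w_bI\otimes\sigma_b+\sum_{a,b}C_{ba}\sigma_a\otimes\sigma_b\big)$, giving coordinates $(v,w,C)\in\mathbb C^3\times\mathbb C^3\times M_3(\mathbb C)$ on the space $\mathscr L_2$ of L-states. The group $G=\mathrm{SO}_3(\mathbb C)\times\mathrm{SO}_3(\mathbb C)$ ($\cong\mathrm{PGL}_2(\mathbb C)^2$ acting by conjugation) acts by $(g_1,g_2)\cdot(v,w,C)=(g_1v,g_2w,g_2Cg_1^{-1})$. Let $X_0\subseteq\mathscr L_2$ be the linear subspace of $(v,w,C)$ with $v_1=v_2=w_1=w_2=0$ and $C_{ba}=0$ whenever exactly one of $a,b$ equals $3$. The variety of X-states $\mathscr X_2$ is the Zariski closure of $G\cdot X_0$ with reduced structure (equivalently, the Zariski closure of the set of X-states: L-states that, for some choice of bases of the two qubits, are block-diagonal with respect to the even/odd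 parity splitting of the tensor basis). Let $\mathcal S\cong\mathbb C\times\mathbb C\times\mathbb C^3$ be embedded in $\mathscr X_2$ by $(x,y,\lambda)\mapsto(v,w,C)=((0,0,x),(0,0,y),\operatorname{diag}(\lambda_1,\lambda_2,\lambda_3))$. For a group $G$ acting on a variety $X$, a subvariety $\mathcal S$ with normalizer $N=\{g: g\mathcal S\subseteq\mathcal S\}$ is a rational section if there is a dense open $\mathcal S_0\subseteq\mathcal S$ with $\overline{G\mathcal S}=X$ and such that every $g\in G$ with $g\mathcal S_0\cap\mathcal S_0\ne\emptyset$ lies in $N$. *)

(* Defs.v *)
From mathcomp Require Import all_boot all_algebra.
From mathcomp Require Import complex reals.
From mathcomp Require Import mpoly.
Set Implicit Arguments. Unset Strict Implicit. Unset Printing Implicit Defensive.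
Import GRing.Theory.
Local Open Scope ring_scope.

Section XStates.
Variable R : realType.
Local Notation C := (R[i]).

(* An L-state in coordinates (v, w, Cm) : C^3 x C^3 x M_3(C), with
   Cm b a = C_{ba} (row index b, column index a; index 3 of the paper is ordinal 2). *)
Definition Lstate := ('cV[C]_3 * 'cV[C]_3 * 'M[C]_3)%type.

Definition coords (x : Lstate) (i : 'I_15) : C :=
  let: (v, w, M) := x in
  if (i < 3)%N then v (inord i) 0
  else if (i < 6)%N then w (inord (i - 3)) 0
  else M (inord ((i - 6) %/ 3)) (inord ((i - 6) %% 3)).

Definition zclosed (Z : Lstate -> Prop) : Prop :=
  exists P : {mpoly C[15]} -> Prop,
    forall x, Z x <-> (forall p, P p -> p.@[coords x] = 0).

Definition zopen (U : Lstate -> Prop) : Prop := zclosed (fun x => ~ U x).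

Definition zcl (A : Lstate -> Prop) (x : Lstate) : Prop :=
  forall Z, zclosed Z -> (forall y, A y -> Z y) -> Z x.

Definition dense_open_in (S S0 : Lstate -> Prop) : Prop :=
  (exists U, zopen U /\ forall x, S0 x <-> (S x /\ U x)) /\
  (forall x, S x -> zcl S0 x).

Definition SO3 (g : 'M[C]_3) : Prop := g^T *m g = 1%:M /\ \det g = 1.

Definition Gelt := ('M[C]_3 * 'M[C]_3)%type.
Definition inG (g : Gelt) : Prop := SO3 g.1 /\ SO3 g.2.

Definition act (g : Gelt) (x : Lstate) : Lstate :=
  let: (v, w, M) := x in (g.1 *m v, g.2 *m w, g.2 *m M *m invmx g.1).

Definition Gorbits (A : Lstate -> Prop) (x : Lstate) : Prop :=
  exists g y, inG g /\ A y /\ x = act g y.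

Definition X0 (x : Lstate) : Prop :=
  let: (v, w, M) := x in
  [/\ v 0 0 = 0, v 1 0 = 0, w 0 0 = 0, w 1 0 = 0 &
      forall a b : 'I_3, (b == 2) != (a == 2) -> M b a = 0].

Definition X2 : Lstate -> Prop := zcl (Gorbits X0).

Definition S_emb (a b : C) (l : 'rV[C]_3) : Lstate :=
  (\col_(i < 3) (if i == 2 then a else 0),
   \col_(i < 3) (if i == 2 then b else 0),
   diag_mx l).

Definition Sset (x : Lstate) : Prop := exists a b l, x = S_emb a b l.

Definition normalizer (S : Lstate -> Prop) (g : Gelt) : Prop :=
  inG g /\ forall s, S s -> S (act g s).

Definition rational_section (X S : Lstate -> Prop) : Prop :=
  exists S0 : Lstate -> Prop,
    dense_open_in S S0 /\
    (forall x, zcl (Gorbits S) x <-> X x) /\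
    (forall g, inG g -> (exists s, S0 s /\ S0 (act g s)) -> normalizer S g).

End XStates.

(* Main.v *)
Require Import Defs.
From mathcomp Require Import all_boot all_algebra.
From mathcomp Require Import complex reals.
From mathcomp Require Import mpoly ring.
Set Implicit Arguments. Unset Strict Implicit. Unset Printing Implicit Defensive.
Import GRing.Theory Num.Theory.
Local Open Scope ring_scope.

Section Proof.
Variable R : realType.
Local Notation C := (R[i]).

Definition line (x d : Lstate R) (t : C) : Lstate R :=
  (x.1.1 + t *: d.1.1, x.1.2 + t *: d.1.2, x.2 + t *: d.2).

Lemma coords_line x d t i : coords (line x d t) i = coords x i + t * coords d i.
Proof.
case: x => [[v w] M]; case: d => [[v' w'] M'] /=.
by case: ifP => _; [|case: ifP => _]; rewrite !mxE.
Qed.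

Lemma line_poly n (c e : 'I_n -> C) (p : {mpoly C[n]}) :
  exists Q : {poly C}, forall t, Q.[t] = p.@[fun i => c i + t * e i].
Proof.
elim/mpolyind: p => [|a m p _ _ [Q HQ]].
  by exists 0 => t; rewrite meval0 horner0.
exists (a%:P * \prod_i ((c i)%:P + e i *: 'X) ^+ (m i) + Q) => t.
rewrite mevalD mevalZ mevalX hornerD hornerM hornerC HQ horner_prod.
congr (_ * _ + _); apply: eq_bigr => i _.
by rewrite horner_exp hornerD hornerC hornerZ hornerX mulrC.
Qed.

Lemma poly_all_roots (Q : {poly C}) : (forall t, Q.[t] = 0) -> Q = 0.
Proof.
move=> h; apply: (@roots_geq_poly_eq0 _ Q [seq i%:R | i <- iota 0 (size Q)]).
- by apply/allP => x /mapP [i _ ->]; apply/rootP.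
- rewrite map_inj_uniq ?iota_uniq // => i j /eqP; rewrite eqr_nat => /eqP.
  done.
- by rewrite size_map size_iota.
Qed.

Lemma line_zcl (Z : Lstate R -> Prop) x d (H : {poly C}) :
  zclosed Z -> H != 0 -> (forall t, ~~ root H t -> Z (line x d t)) -> Z x.
Proof.
move=> [P hP] H0 hZ; apply/hP => p Pp.
have [Q HQ] := line_poly (coords x) (coords d) p.
have QH : Q * H = 0.
  apply: poly_all_roots => t; rewrite hornerM.
  have [/rootP ->|nr] := boolP (root H t); first by rewrite mulr0.
  have := (hP _).1 (hZ t nr) p Pp.
  rewrite (meval_eq _ (coords_line x d t)) -HQ => ->; by rewrite mul0r.
move: QH => /eqP; rewrite mulf_eq0 (negbTE H0) orbF => /eqP Q0.
have := HQ 0; rewrite Q0 horner0 => ->.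
by apply: meval_eq => i; rewrite mul0r addr0.
Qed.

End Proof.

Section S.
Variable R : realType.
Local Notation C := (R[i]).
Definition mk3 (l : seq (seq C)) : 'M[C]_3 := \matrix_(i < 3, j < 3) nth 0 (nth [::] l i) j.
Definition rw3 (a b c : C) : 'rV[C]_3 := \row_(i < 3) nth 0 [:: a; b; c] i.
Definition F := mk3 [:: [:: 1; 1; 0]; [:: - 'i; 'i; 0]; [:: 0; 0; 1]].
Definition Fi := mk3 [:: [:: 1/2; 'i/2; 0]; [:: 1/2; - 'i/2; 0]; [:: 0; 0; 1]].
Lemma hi : ('i : C) ^+ 2 = -1. Proof. exact: sqrCi. Qed.
Lemma two_neq0 : (2 : C) != 0. Proof. by rewrite pnatr_eq0. Qed.
Ltac mx3 := apply/matrixP; case=> [[|[|[|?]]] ?]; case=> [[|[|[|?]]] ?];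
  rewrite ?(mxE, big_ord_recl, big_ord0) //=.
Lemma FFi : F *m Fi = 1%:M.
Proof. mx3; by field: hi. Qed.

Lemma FiF : Fi *m F = 1%:M.
Proof. mx3; by field: hi. Qed.
Definition Dz (z : C) := diag_mx (rw3 z z^-1 1).
Definition K3 := mk3 [:: [:: 0; 2; 0]; [:: 2; 0; 0]; [:: 0; 0; 1]].
Lemma FtF : F^T *m F = K3.
Proof. mx3; rewrite ?mulr0n ?mulr1n; by ring: hi. Qed.
Lemma DKD z : z != 0 -> Dz z *m K3 *m Dz z = K3.
Proof. move=> z0; mx3; rewrite ?mulr0n ?mulr1n; by field. Qed.
Lemma FiKFi : Fi^T *m K3 *m Fi = 1%:M.
Proof. mx3; rewrite ?mulr0n ?mulr1n; by field: hi. Qed.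
Lemma DDinv z : z != 0 -> Dz z *m Dz z^-1 = 1%:M.
Proof. move=> z0; mx3; rewrite ?mulr0n ?mulr1n; by field. Qed.
Definition g (z : C) := F *m Dz z *m Fi.
Lemma g_inv z : z != 0 -> g z *m g z^-1 = 1%:M.
Proof.
move=> z0; rewrite /g -!mulmxA (mulmxA Fi) FiF mul1mx (mulmxA (Dz z)) DDinv //.
by rewrite mul1mx FFi.
Qed.
Lemma invmx_right (A B : 'M[C]_3) : A *m B = 1%:M -> invmx A = B.
Proof.
move=> h; have [uA _] := mulmx1_unit h.
by rewrite -[invmx A]mulmx1 -h mulmxA mulVmx ?mul1mx.
Qed.
Lemma g_invmx z : z != 0 -> invmx (g z) = g z^-1.
Proof. by move=> z0; apply: invmx_right; apply: g_inv. Qed.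
Lemma g_SO3 z : z != 0 -> SO3 (g z).
Proof.
move=> z0; split.
  have -> : (g z)^T *m g z = Fi^T *m (Dz z *m (F^T *m F) *m Dz z) *m Fi.
    by rewrite /g !trmx_mul tr_diag_mx !mulmxA.
  by rewrite FtF DKD // FiKFi.
rewrite /g !det_mulmx det_diag !big_ord_recl big_ord0 !mxE /=.
rewrite mulrAC -det_mulmx FFi det1; by field.
Qed.
Definition colz (a : C) : 'cV[C]_3 := \col_(i < 3) (if i == 2 then a else 0).
Lemma Fi_col a : Fi *m colz a = colz a.
Proof. mx3; rewrite ?mulr0n ?mulr1n; by ring. Qed.
Lemma F_col a : F *m colz a = colz a.
Proof. mx3; rewrite ?mulr0n ?mulr1n; by ring. Qed.
Lemma Dz_col z a : Dz z *m colz a = colz a.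
Proof. mx3; rewrite ?mulr0n ?mulr1n; by ring. Qed.
Lemma g_col z a : g z *m colz a = colz a.
Proof. by rewrite /g -!mulmxA Fi_col Dz_col F_col. Qed.
End S.

Arguments F {R}. Arguments Fi {R}. Arguments K3 {R}.

Section S.
Variable R : realType.
Local Notation C := (R[i]).
Ltac mx3b := apply/matrixP; case=> [[|[|[|?]]] ?]; case=> [[|[|[|?]]] ?];
  rewrite ?(mxE, big_ord_recl, big_ord0) //=.

Lemma coreD (p q r s P Q z2 m : C) : P != 0 -> Q != 0 -> z2 != 0 -> q != 0 -> p != 0 ->
  P ^+ 2 = p * s -> Q ^+ 2 = q * r -> z2 ^+ 2 = p / P * (q / Q) ->
  Dz z2 *m mk3 [:: [:: P; Q; 0]; [:: Q; P; 0]; [:: 0; 0; m]] *m Dz ((q / Q) / z2)^-1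
  = mk3 [:: [:: p; q; 0]; [:: r; s; 0]; [:: 0; 0; m]].
Proof.
move=> P0 Q0 z0 q0 p0 hP hQ hz; mx3b; rewrite ?mulr0n ?mulr1n.
all: rewrite ?(mul0r, mulr0, add0r, addr0, mul1r, mulr1) //.
- have -> : z2 * P / (q / Q / z2) = z2 ^+ 2 * P * Q / q.
    by field; rewrite ?P0 ?Q0 ?z0 ?q0 ?p0.
  by rewrite hz; field; rewrite ?P0 ?Q0 ?z0 ?q0 ?p0.
- by field; rewrite ?P0 ?Q0 ?z0 ?q0 ?p0.
- by rewrite -[r](mulKf q0) -hQ; field; rewrite ?P0 ?Q0 ?z0 ?q0 ?p0.
- have -> : z2^-1 * P / (q / Q / z2)^-1 = P * q / (z2 ^+ 2 * Q).
    by field; rewrite ?P0 ?Q0 ?z0 ?q0 ?p0.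
  by rewrite hz -[s](mulKf p0) -hP; field; rewrite ?P0 ?Q0 ?z0 ?q0 ?p0.
Qed.

Lemma FiDF (P Q m : C) :
  Fi *m diag_mx (rw3 (P + Q) (P - Q) m) *m F = mk3 [:: [:: P; Q; 0]; [:: Q; P; 0]; [:: 0; 0; m]].
Proof. mx3b; rewrite ?mulr0n ?mulr1n; by field: (hi R). Qed.

Definition pq (a b c d : C) := (a + d + 'i * (c - b)) / 2.
Definition qq (a b c d : C) := (a - d + 'i * (c + b)) / 2.
Definition rq (a b c d : C) := (a - d - 'i * (c + b)) / 2.
Definition sq (a b c d : C) := (a + d - 'i * (c - b)) / 2.

Lemma Mdecomp (a b c d m : C) : mk3 [:: [:: a; b; 0]; [:: c; d; 0]; [:: 0; 0; m]] =
  F *m mk3 [:: [:: pq a b c d; qq a b c d; 0]; [:: rq a b c d; sq a b c d; 0]; [:: 0; 0; m]] *m Fi.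
Proof. rewrite /pq /qq /rq /sq; mx3b; by field: (hi R). Qed.

Lemma diagonalize (a b c d m : C) :
  pq a b c d != 0 -> qq a b c d != 0 -> rq a b c d != 0 -> sq a b c d != 0 ->
  exists z1 z2 (l : 'rV[C]_3), [/\ z1 != 0, z2 != 0 &
    mk3 [:: [:: a; b; 0]; [:: c; d; 0]; [:: 0; 0; m]] = g z2 *m diag_mx l *m g z1^-1].
Proof.
set p := pq a b c d; set q := qq a b c d; set r := rq a b c d; set s := sq a b c d.
move=> p0 q0 r0 s0.
pose P := sqrtC (p * s); pose Q := sqrtC (q * r).
have P0 : P != 0 by rewrite sqrtC_eq0 mulf_neq0.
have Q0 : Q != 0 by rewrite sqrtC_eq0 mulf_neq0.
pose z2 := sqrtC (p / P * (q / Q)).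
have z0 : z2 != 0.
  by rewrite sqrtC_eq0; apply: mulf_neq0; apply: mulf_neq0; rewrite ?invr_eq0.
have z10 : q / Q / z2 != 0.
  by apply: mulf_neq0; [apply: mulf_neq0|]; rewrite ?invr_eq0.
exists (q / Q / z2), z2, (rw3 (P + Q) (P - Q) m); split => //.
rewrite Mdecomp -/p -/q -/r -/s.
rewrite -(coreD m P0 Q0 z0 q0 p0 (sqrtCK _) (sqrtCK _) (sqrtCK _)) -FiDF.
by rewrite /g !mulmxA.
Qed.
End S.

Section S.
Variable R : realType.
Local Notation C := (R[i]).

Lemma ord3_cases (i : 'I_3) : i = 0 \/ i = 1 \/ i = 2.
Proof.
case: i => [[|[|[|?]]] h]; [left|right; left|right; right|by []]; by apply: val_inj.
Qed.

Lemma SO3_unit (g : 'M[C]_3) : SO3 g -> g \in unitmx.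
Proof. by case=> _ d; rewrite unitmxE d unitr1. Qed.

Lemma SO3_inv (g : 'M[C]_3) : SO3 g -> invmx g = g^T.
Proof. case=> h _; apply: invmx_right; exact: mulmx1C. Qed.

Lemma SO3M (g h : 'M[C]_3) : SO3 g -> SO3 h -> SO3 (g *m h).
Proof.
move=> [hg dg] [hh dh]; split; last by rewrite det_mulmx dg dh mulr1.
by rewrite trmx_mul mulmxA -(mulmxA h^T) hg mulmx1 hh.
Qed.

Lemma inGM (g h : Gelt R) : inG g -> inG h -> inG (g.1 *m h.1, g.2 *m h.2).
Proof. by move=> [g1 g2] [h1 h2]; split; apply: SO3M. Qed.

Lemma act_comp (g h : Gelt R) x : inG g -> inG h ->
  act g (act h x) = act (g.1 *m h.1, g.2 *m h.2) x.
Proof.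
case: x => [[v w] M]; case: g => [g1 g2]; case: h => [h1 h2] [/= sg1 sg2] [/= sh1 sh2].
rewrite /act /= (SO3_inv (SO3M sg1 sh1)) (SO3_inv sg1) (SO3_inv sh1).
by rewrite trmx_mul !mulmxA.
Qed.

Lemma act_line (g : Gelt R) x d t : act g (line x d t) = line (act g x) (act g d) t.
Proof.
case: x => [[v w] M]; case: d => [[v' w'] M']; rewrite /act /line /=.
by rewrite !mulmxDr !mulmxDl -!scalemxAr -?scalemxAl.
Qed.

Lemma S_embE (a b : C) l : S_emb a b l = (colz a, colz b, diag_mx l).
Proof. by []. Qed.

Lemma S_X0 (x : Lstate R) : Sset x -> X0 x.
Proof.
move=> [a [b [l ->]]]; rewrite /X0 /S_emb /=; split; rewrite ?mxE //.
move=> i j h; rewrite mxE; case: eqP => [e|]; last by rewrite mulr0n.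
by rewrite e eqxx in h.
Qed.

Lemma X0_form (v w : 'cV[C]_3) (M : 'M[C]_3) : X0 (v, w, M) ->
  [/\ v = colz (v 2 0), w = colz (w 2 0) &
      M = mk3 [:: [:: M 0 0; M 0 1; 0]; [:: M 1 0; M 1 1; 0]; [:: 0; 0; M 2 2]]].
Proof.
move=> [v0 v1 w0 w1 hM]; split.
- apply/matrixP => i j; rewrite !mxE (ord1 j).
  by case: (ord3_cases i) => [->|[->|->]].
- apply/matrixP => i j; rewrite !mxE (ord1 j).
  by case: (ord3_cases i) => [->|[->|->]].
- apply/matrixP => i j; rewrite !mxE.
  by case: (ord3_cases i) => [->|[->|->]]; case: (ord3_cases j) => [->|[->|->]] //=;
    apply: hM.
Qed.

End S.

Section S.
Variable R : realType.
Local Notation C := (R[i]).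

Lemma X0_GS (v w : 'cV[C]_3) (M : 'M[C]_3) : X0 (v, w, M) ->
  pq (M 0 0) (M 0 1) (M 1 0) (M 1 1) != 0 -> qq (M 0 0) (M 0 1) (M 1 0) (M 1 1) != 0 ->
  rq (M 0 0) (M 0 1) (M 1 0) (M 1 1) != 0 -> sq (M 0 0) (M 0 1) (M 1 0) (M 1 1) != 0 ->
  Gorbits (@Sset R) (v, w, M).
Proof.
move=> hX p0 q0 r0 s0; have [ev ew eM] := X0_form hX.
have [z1 [z2 [l [z10 z20 e]]]] := diagonalize (M 2 2) p0 q0 r0 s0.
exists (g z1, g z2), (S_emb (v 2 0) (w 2 0) l); split; [|split].
- by split; apply: g_SO3.
- by exists (v 2 0), (w 2 0), l.
- rewrite S_embE /act /= !g_col g_invmx // -e.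
  by rewrite -ev -ew -eM.
Qed.

Definition lin (al be : C) : {poly C} := al *: 'X + be%:P.
Lemma hornerLin al be t : (lin al be).[t] = al * t + be.
Proof. by rewrite /lin hornerD hornerZ hornerX hornerC. Qed.
Lemma lin_neq0 al be : al != 0 -> lin al be != 0.
Proof.
move=> h; apply/eqP => e; have := congr1 (fun p : {poly C} => p`_1) e.
rewrite /lin coefD coefZ coefX coefC /= mulr1 addr0 coef0 => /eqP.
by rewrite (negbTE h).
Qed.

Lemma half_neq0 : (1 / 2 : C) != 0.
Proof. by rewrite mul1r invr_eq0 pnatr_eq0. Qed.

Lemma X2_sub (x : Lstate R) : X2 x -> zcl (Gorbits (@Sset R)) x.
Proof.
move=> hx Z hZ hGS; apply: (hx Z hZ) => y [gg [y0 [hg [hy0 ->]]]].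
case: y0 hy0 => [[v w] M] hy0.
pose d : Lstate R := (0, 0, delta_mx 0 0).
pose a := M 0 0; pose b := M 0 1; pose c := M 1 0; pose e := M 1 1.
pose H := lin (1/2) (pq a b c e) * lin (1/2) (qq a b c e) *
          lin (1/2) (rq a b c e) * lin (1/2) (sq a b c e).
apply: (@line_zcl R Z _ (act gg d) H) => //.
  by rewrite !mulf_neq0 ?lin_neq0 ?half_neq0.
move=> t nr; rewrite -act_line.
have -> : line (v, w, M) d t = (v, w, M + t *: delta_mx 0 0).
  by rewrite /line /= !scaler0 !addr0.
have E : forall i j, (M + t *: delta_mx 0 0) i j = M i j + t * ((i == 0) && (j == 0))%:R.
  by move=> i j; rewrite !mxE.
have : Gorbits (@Sset R) (v, w, M + t *: delta_mx 0 0).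
  move: nr; rewrite /root !hornerM !hornerLin !mulf_eq0 !negb_or.
  move=> /andP[/andP[/andP[h1 h2] h3] h4].
  case: hy0 => v0 v1 w0 w1 hM.
  apply: X0_GS; rewrite ?E /=.
  - split => // i j hij; rewrite E (hM _ _ hij) add0r.
    case: andP => [[/eqP ei /eqP ej]|_]; last by rewrite mulr0.
    by rewrite ei ej eqxx in hij.
  - by move: h1; rewrite /pq /a /b /c /e; congr (_ != _); field.
  - by move: h2; rewrite /qq /a /b /c /e; congr (_ != _); field.
  - by move: h3; rewrite /rq /a /b /c /e; congr (_ != _); field.
  - by move: h4; rewrite /sq /a /b /c /e; congr (_ != _); field.
move=> [h [s [hh [hs ->]]]]; apply: hGS.
exists (gg.1 *m h.1, gg.2 *m h.2), s; split; [exact: inGM|split=> //].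
exact: act_comp.
Qed.

End S.

Section S.
Variable R : realType.
Local Notation C := (R[i]).

Definition qpol : {mpoly C[15]} :=
  'X_(inord 2) * 'X_(inord 5) *
  ('X_(inord 6) * 'X_(inord 6) - 'X_(inord 10) * 'X_(inord 10)) *
  ('X_(inord 6) * 'X_(inord 6) - 'X_(inord 14) * 'X_(inord 14)) *
  ('X_(inord 10) * 'X_(inord 10) - 'X_(inord 14) * 'X_(inord 14)).

Definition U (x : Lstate R) : Prop := qpol.@[coords x] != 0.

Lemma i3_0 : (inord 0 : 'I_3) = 0. Proof. by apply: val_inj; rewrite /= inordK. Qed.
Lemma i3_1 : (inord 1 : 'I_3) = 1. Proof. by apply: val_inj; rewrite /= inordK. Qed.
Lemma i3_2 : (inord 2 : 'I_3) = 2. Proof. by apply: val_inj; rewrite /= inordK. Qed.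

Lemma c2 (v w : 'cV[C]_3) M : coords (v, w, M) (inord 2) = v 2 0.
Proof. rewrite /coords inordK //=; exact: (congr1 (fun i => v i 0) i3_2). Qed.
Lemma c5 (v w : 'cV[C]_3) M : coords (v, w, M) (inord 5) = w 2 0.
Proof. rewrite /coords inordK //=; exact: (congr1 (fun i => w i 0) i3_2). Qed.
Lemma c6 (v w : 'cV[C]_3) M : coords (v, w, M) (inord 6) = M 0 0.
Proof. rewrite /coords inordK //=; exact: (congr2 (fun i j => M i j) i3_0 i3_0). Qed.
Lemma c10 (v w : 'cV[C]_3) M : coords (v, w, M) (inord 10) = M 1 1.
Proof. rewrite /coords inordK //=; exact: (congr2 (fun i j => M i j) i3_1 i3_1). Qed.
Lemma c14 (v w : 'cV[C]_3) M : coords (v, w, M) (inord 14) = M 2 2.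
Proof. rewrite /coords inordK //=; exact: (congr2 (fun i j => M i j) i3_2 i3_2). Qed.

Lemma qpol_gen (v w : 'cV[C]_3) M : qpol.@[coords (v, w, M)] =
  v 2 0 * w 2 0 * (M 0 0 * M 0 0 - M 1 1 * M 1 1) * (M 0 0 * M 0 0 - M 2 2 * M 2 2) *
  (M 1 1 * M 1 1 - M 2 2 * M 2 2).
Proof. by rewrite /qpol !mevalM !mevalB !mevalM !mevalXU c2 c5 c6 c10 c14. Qed.

Lemma qpol_S (a b : C) l : qpol.@[coords (S_emb a b l)] =
  a * b * (l 0 0 * l 0 0 - l 0 1 * l 0 1) * (l 0 0 * l 0 0 - l 0 2 * l 0 2) *
  (l 0 1 * l 0 1 - l 0 2 * l 0 2).
Proof. by rewrite S_embE qpol_gen !mxE !eqxx !mulr1n. Qed.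
End S.

Section S.
Variable R : realType.
Local Notation C := (R[i]).

Definition S0 (x : Lstate R) : Prop := Sset x /\ U x.

Lemma S_dense (x : Lstate R) : Sset x -> zcl S0 x.
Proof.
move=> [a [b [l ->]]] Z hZ hS0.
pose c : 'rV[C]_3 := rw3 1 2 3; pose d := S_emb 1 1 c.
pose l0 := l 0 0; pose l1 := l 0 1; pose l2 := l 0 2.
pose H := lin 1 a * lin 1 b * lin (-1) (l0 - l1) * lin 3 (l0 + l1) *
          lin (-2) (l0 - l2) * lin 4 (l0 + l2) * lin (-1) (l1 - l2) * lin 5 (l1 + l2).
apply: (@line_zcl R Z _ d H) => //.
  by rewrite !mulf_neq0 ?lin_neq0 ?oppr_eq0 ?pnatr_eq0 ?oner_eq0.
move=> t nr.
have -> : line (S_emb a b l) d t = S_emb (a + t) (b + t) (l + t *: c).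
  rewrite /line /d !S_embE /=; congr (_, _, _); apply/matrixP => i j; rewrite !mxE.
  - by case: ifP => _; rewrite ?mulr1 ?mulr0 ?addr0.
  - by case: ifP => _; rewrite ?mulr1 ?mulr0 ?addr0.
  - by case: eqP => _; rewrite ?mulr1n ?mulr0n ?mulr0 ?addr0.
apply: hS0; split; first by exists (a + t), (b + t), (l + t *: c).
rewrite /U qpol_S; move: nr; rewrite /root; congr (_ != _).
rewrite !hornerM !hornerLin !mxE /= /l0 /l1 /l2; ring.
Qed.

Lemma colz_scale (a a2 : C) : a != 0 -> colz a2 = (a2 / a) *: colz a.
Proof.
move=> a0; apply/matrixP => i j; rewrite !mxE.
by case: ifP => _; rewrite ?mulr0 ?divfK.
Qed.

Lemma g_colz (g : 'M[C]_3) (a a' a2 : C) : a != 0 -> g *m colz a = colz a' ->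
  g *m colz a2 = colz (a2 / a * a').
Proof.
move=> a0 e; rewrite (colz_scale a2 a0) -scalemxAr e.
by apply/matrixP => i j; rewrite !mxE; case: ifP => _; rewrite ?mulr0.
Qed.

Lemma normal_part (gg : Gelt R) (a b a' b' : C) (l l' : 'rV[C]_3) :
  inG gg -> U (S_emb a b l) -> U (S_emb a' b' l') ->
  act gg (S_emb a b l) = S_emb a' b' l' -> normalizer (@Sset R) gg.
Proof.
case: gg => g1 g2 hg; have [s1 s2] := hg; have [o1 _] := s1; have [o2 _] := s2.
rewrite /U !qpol_S => hU hU'.
move: hU; rewrite !mulf_eq0 !negb_or => /andP[/andP[/andP[/andP[a0 b0] _] _] _].
move: hU'; rewrite !mulf_eq0 !negb_or => /andP[/andP[/andP[/andP[_ _] h01] h02] h12].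
have dist : forall i j : 'I_3, i != j -> l' 0 i * l' 0 i != l' 0 j * l' 0 j.
  move=> i j; case: (ord3_cases i) => [->|[->|->]]; case: (ord3_cases j) => [->|[->|->]];
    rewrite ?eqxx // => _; first [by rewrite -subr_eq0 | by rewrite eq_sym -subr_eq0].
rewrite S_embE /act /= (SO3_inv s1) => -[ea eb eD].
split => // s [a2 [b2 [l2 ->]]].
exists (a2 / a * a'), (b2 / b * b'), (\row_i (g2 *m diag_mx l2 *m g1^T) i i).
rewrite S_embE /act /= (SO3_inv s1) (g_colz a2 a0 ea) (g_colz b2 b0 eb).
congr (_, _, _).
have o1' : forall A : 'M[C]_3, A *m g1^T *m g1 = A by move=> A; rewrite -mulmxA o1 mulmx1.
have o2' : forall A : 'M[C]_3, A *m g2^T *m g2 = A by move=> A; rewrite -mulmxA o2 mulmx1.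
have R2 : diag_mx l' *m (diag_mx l' *m g2) = g2 *m diag_mx l *m diag_mx l.
  have : diag_mx l' *m (diag_mx l')^T *m g2 = g2 *m diag_mx l *m diag_mx l.
    by rewrite -eD !trmx_mul trmxK tr_diag_mx !mulmxA o1' o2'.
  by rewrite tr_diag_mx mulmxA.
have R1 : diag_mx l' *m (diag_mx l' *m g1) = g1 *m diag_mx l *m diag_mx l.
  have : (diag_mx l')^T *m diag_mx l' *m g1 = g1 *m diag_mx l *m diag_mx l.
    by rewrite -eD !trmx_mul trmxK tr_diag_mx !mulmxA o2' o1'.
  by rewrite tr_diag_mx mulmxA.
apply/matrixP => i j.
case: (eqVneq i j) => [->|nij]; first by rewrite !mxE eqxx mulr1n.
rewrite [diag_mx _ i j]mxE (negbTE nij) mulr0n mul_mx_diag !mxE; apply: big1 => k _; rewrite !mxE.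
have := congr1 (fun A : 'M[C]_3 => A i k) R2; rewrite !mul_diag_mx !mul_mx_diag !mxE => e2.
have := congr1 (fun A : 'M[C]_3 => A j k) R1; rewrite !mul_diag_mx !mul_mx_diag !mxE => e1.
have [g2z|g2n] := eqVneq (g2 i k) 0; first by rewrite g2z !mul0r.
have [g1z|g1n] := eqVneq (g1 j k) 0; first by rewrite g1z mulr0.
exfalso; move/negP: (dist i j nij); apply; apply/eqP.
have ei : l' 0 i * l' 0 i = l 0 k * l 0 k.
  by apply: (mulIf g2n); rewrite -mulrA e2; ring.
have ej : l' 0 j * l' 0 j = l 0 k * l 0 k.
  by apply: (mulIf g1n); rewrite -mulrA e1; ring.
by rewrite ei ej.
Qed.

End S.


Theorem propositionB2 (R : realType) : rational_section (@X2 R) (@Sset R).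
Proof.
exists (@S0 R); split; [|split].
- split.
  + exists (@U R); split; last by [].
    exists (fun p => p = qpol R) => x; split.
    * move=> h p ->; apply/eqP; move/negP: h; by rewrite negbK.
    * by move=> h; rewrite /U (h _ erefl) eqxx.
  + exact: S_dense.
- move=> x; split.
  + move=> hx Z hZ hGX; apply: (hx Z hZ) => y [gg [y0 [hg [hy0 ->]]]].
    apply: hGX; exists gg, y0; split => //; split => //; exact: S_X0.
  + exact: X2_sub.
- move=> gg hg [s [[[a [b [l es]]] hs] [[a' [b' [l' es']]] hs']]].
  subst s; rewrite es' in hs'; exact: normal_part hg hs hs' es'.
Qed.
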